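(* Let $A$ be a partial ring and $(X,\mathcal{O}_X)=\mathrm{Spec}(A)$. For any element $s\in A$, there exists a monomorphism (injective homomorphism of partial rings) $A_s\to\mathcal{O}_X(D(s))$.
   Context: A partial ring is a set $A$ with $0$, a set $A_2\subseteq A\times A$ of summable pairs and a partial addition $+\colon A_2\to A$ (with $0$ a unit summable with everything, commutative, and associative in the sense: $(a,b),(a+b,c)\in A_2$ iff $(b,c),(a,b+c)\in A_2$, and then $(a+b)+c=a+(b+c)$), together with a commutative associative multiplication with unit $1$ such that $0\cdot a=0$ and $(a_1,a_2)\in A_2\Rightarrow(a_1x,a_2x)\in A_2$, $(a_1+a_2)x=a_1x+a_2x$. For a multiplicative subset $S$, $S^{-1}A$ is the set of classes $a/s$ with $a/s=b/t$ iff $uta=usb$ for some $u\in S$, product $\frac{a}{s}\frac{b}{t}=\frac{ab}{st}$, and $(a/s,b/t)$ summable iff $(uta,usb)\in A_2$ for some $u\in S$; $A_s$ denotes the localization at $\{s^k:k\in\mathbb{N}\}$. $X=X_A$ is the set of prime ideals of $A$ with topology generated by $D(a)=\{\mathfrak p: a\notin\mathfrak p\}$. For open $U$, $S_U=\{a: a\notin\mathfrak p\ \forall\mathfrak p\in U\}$; $\mathcal{O}_X$ is the sheafification of the presheaf $U\mapsto S_U^{-1}A$. $\mathrm{Spec}(A)=(X_A,\mathcal{O}_X)$. *)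

(* Defs.v *)
From Stdlib Require Import ClassicalEpsilon List.

(* Partial rings.  The partial addition is a total function [padd] whose
   values are only meaningful on summable pairs ([psum]). *)
Record partial_ring : Type := PartialRing {
  pcar :> Type;
  pzero : pcar;
  pone : pcar;
  psum : pcar -> pcar -> Prop;
  padd : pcar -> pcar -> pcar;
  pmul : pcar -> pcar -> pcar;
  psum0 : forall a, psum a pzero;
  padd0 : forall a, padd a pzero = a;
  psumC : forall a b, psum a b -> psum b a;
  paddC : forall a b, psum a b -> padd a b = padd b a;
  psumA : forall a b c,
      (psum a b /\ psum (padd a b) c) <-> (psum b c /\ psum a (padd b c));
  paddA : forall a b c, psum a b -> psum (padd a b) c ->
      padd (padd a b) c = padd a (padd b c);
  pmulA : forall a b c, pmul (pmul a b) c = pmul a (pmul b c);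
  pmulC : forall a b, pmul a b = pmul b a;
  pmul1 : forall a, pmul pone a = a;
  pmul0 : forall a, pmul pzero a = pzero;
  psumM : forall a1 a2 x, psum a1 a2 -> psum (pmul a1 x) (pmul a2 x);
  pmulDl : forall a1 a2 x, psum a1 a2 ->
      pmul (padd a1 a2) x = padd (pmul a1 x) (pmul a2 x)
}.
Arguments pzero {_}. Arguments pone {_}. Arguments psum {_} _ _.
Arguments padd {_} _ _. Arguments pmul {_} _ _.

(* The operations of a partial ring (no axioms): the target of a homomorphism
   only needs its operations. *)
Record pr_ops : Type := PROps {
  ocar :> Type;
  ozero : ocar;
  oone : ocar;
  osum : ocar -> ocar -> Prop;
  oadd : ocar -> ocar -> ocar;
  omul : ocar -> ocar -> ocar
}.

Definition ops_of (A : partial_ring) : pr_ops :=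
  PROps A pzero pone psum padd pmul.

Definition is_pr_hom (P Q : pr_ops) (f : P -> Q) : Prop :=
  f (ozero P) = ozero Q /\ f (oone P) = oone Q /\
  (forall a b, f (omul P a b) = omul Q (f a) (f b)) /\
  (forall a b, osum P a b -> osum Q (f a) (f b) /\ f (oadd P a b) = oadd Q (f a) (f b)).

Definition is_pr_mono (P Q : pr_ops) (f : P -> Q) : Prop :=
  is_pr_hom P Q f /\ (forall x y, f x = f y -> x = y).

Definition quot (T : Type) (R : T -> T -> Prop) : Type :=
  { C : T -> Prop | exists x, C = R x }.
Definition qcls {T : Type} {R : T -> T -> Prop} (x : T) : quot T R :=
  exist _ (R x) (ex_intro _ x eq_refl).
Definition qrepr {T : Type} {R : T -> T -> Prop} (c : quot T R) : T :=
  proj1_sig (constructive_indefinite_description _ (proj2_sig c)).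

Definition lrep (A : partial_ring) (S : A -> Prop) : Type :=
  { p : A * A | S (snd p) }.
Definition lnum {A S} (x : lrep A S) : A := fst (proj1_sig x).
Definition lden {A S} (x : lrep A S) : A := snd (proj1_sig x).

Definition leq (A : partial_ring) (S : A -> Prop) (x y : lrep A S) : Prop :=
  exists u, S u /\
    pmul (pmul u (lden y)) (lnum x) = pmul (pmul u (lden x)) (lnum y).

Definition loc (A : partial_ring) (S : A -> Prop) : Type := quot (lrep A S) (leq A S).

Definition lmk {A : partial_ring} {S : A -> Prop} (a s : A) (hs : S s) : loc A S :=
  qcls (exist (fun p : A * A => S (snd p)) (a, s) hs).

Definition loc_mul (A : partial_ring) (S : A -> Prop)
    (SM : forall x y, S x -> S y -> S (pmul x y)) (x y : loc A S) : loc A S :=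
  let r := qrepr x in let r' := qrepr y in
  lmk (pmul (lnum r) (lnum r')) (pmul (lden r) (lden r'))
      (SM _ _ (proj2_sig r) (proj2_sig r')).

Definition loc_sum (A : partial_ring) (S : A -> Prop) (x y : loc A S) : Prop :=
  let r := qrepr x in let r' := qrepr y in
  exists u, S u /\
    psum (pmul (pmul u (lden r')) (lnum r)) (pmul (pmul u (lden r)) (lnum r')).

Definition loc_add (A : partial_ring) (S : A -> Prop) (S1 : S pone)
    (SM : forall x y, S x -> S y -> S (pmul x y)) (x y : loc A S) : loc A S :=
  let r := qrepr x in let r' := qrepr y in
  let w := epsilon (inhabits (exist S pone S1))
     (fun u : {u : A | S u} =>
        psum (pmul (pmul (proj1_sig u) (lden r')) (lnum r))
             (pmul (pmul (proj1_sig u) (lden r)) (lnum r'))) in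
  let u := proj1_sig w in
  lmk (padd (pmul (pmul u (lden r')) (lnum r)) (pmul (pmul u (lden r)) (lnum r')))
      (pmul (pmul u (lden r)) (lden r'))
      (SM _ _ (SM _ _ (proj2_sig w) (proj2_sig r)) (proj2_sig r')).

Definition loc_ops (A : partial_ring) (S : A -> Prop) (S1 : S pone)
    (SM : forall x y, S x -> S y -> S (pmul x y)) : pr_ops :=
  PROps (loc A S) (lmk pzero pone S1) (lmk pone pone S1)
        (loc_sum A S) (loc_add A S S1 SM) (loc_mul A S SM).

Definition ppow {A : partial_ring} (s : A) (k : nat) : A := Nat.iter k (pmul s) pone.
Definition powS {A : partial_ring} (s : A) : A -> Prop := fun t => exists k, t = ppow s k.

Lemma ppow_add (A : partial_ring) (s : A) k m :
  ppow s (k + m) = pmul (ppow s k) (ppow s m).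
Proof.
  induction k as [|k IH]; simpl.
  - symmetry. apply pmul1.
  - unfold ppow in *. simpl. rewrite IH. symmetry. apply pmulA.
Qed.

Lemma powS1 (A : partial_ring) (s : A) : powS s pone.
Proof. exists 0. reflexivity. Qed.

Lemma powSM (A : partial_ring) (s : A) :
  forall x y, powS s x -> powS s y -> powS s (pmul x y).
Proof.
  intros x y [k ->] [m ->]. exists (k + m). symmetry. apply ppow_add.
Qed.

Definition loc_pow (A : partial_ring) (s : A) : pr_ops :=
  loc_ops A (powS s) (powS1 A s) (powSM A s).

Definition is_ideal (A : partial_ring) (I : A -> Prop) : Prop :=
  I pzero /\
  (forall a b, I a -> I b -> psum a b -> I (padd a b)) /\
  (forall a x, I a -> I (pmul a x)).

Definition is_prime (A : partial_ring) (I : A -> Prop) : Prop :=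
  is_ideal A I /\ ~ I pone /\ (forall a b, I (pmul a b) -> I a \/ I b).

Definition spec_pt (A : partial_ring) : Type := { p : A -> Prop | is_prime A p }.

Definition Dopen {A : partial_ring} (a : A) : spec_pt A -> Prop :=
  fun p => ~ proj1_sig p a.

(* Open sets of the topology generated by the D(a): unions of finite
   intersections of D(a)'s. *)
Definition is_open {A : partial_ring} (U : spec_pt A -> Prop) : Prop :=
  forall p, U p -> exists l : list A,
    (forall a, In a l -> Dopen a p) /\
    (forall q, (forall a, In a l -> Dopen a q) -> U q).

Definition subU {A : partial_ring} (V U : spec_pt A -> Prop) : Prop :=
  forall p, V p -> U p.

Definition S_U {A : partial_ring} (U : spec_pt A -> Prop) : A -> Prop :=
  fun a => forall p, U p -> Dopen a p.

Lemma S_U1 (A : partial_ring) (U : spec_pt A -> Prop) : S_U U pone.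
Proof. intros p _. exact (proj1 (proj2 (proj2_sig p))). Qed.

Lemma S_UM (A : partial_ring) (U : spec_pt A -> Prop) :
  forall x y, S_U U x -> S_U U y -> S_U U (pmul x y).
Proof.
  intros x y hx hy p hU H. pose proof (proj2 (proj2 (proj2_sig p))) as hpr.
  destruct (hpr _ _ H) as [H1|H1].
  - exact (hx _ hU H1).
  - exact (hy _ hU H1).
Qed.

Definition Floc (A : partial_ring) (U : spec_pt A -> Prop) : Type := loc A (S_U U).
Definition Fops (A : partial_ring) (U : spec_pt A -> Prop) : pr_ops :=
  loc_ops A (S_U U) (S_U1 A U) (S_UM A U).

Definition Sres {A : partial_ring} {U V : spec_pt A -> Prop} (h : subU V U)
    (a : A) (ha : S_U U a) : S_U V a := fun p hp => ha p (h p hp).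

Definition res {A : partial_ring} {U V : spec_pt A -> Prop} (h : subU V U)
    (x : Floc A U) : Floc A V :=
  let r := qrepr x in lmk (lnum r) (lden r) (Sres h _ (proj2_sig r)).

Lemma open_full (A : partial_ring) : @is_open A (fun _ => True).
Proof. intros p _. exists nil. split; [intros a [] | intros; exact I]. Qed.

Lemma open_inter (A : partial_ring) (U V : spec_pt A -> Prop) :
  is_open U -> is_open V -> is_open (fun q => U q /\ V q).
Proof.
  intros hU hV p [pU pV].
  destruct (hU p pU) as [l [hl1 hl2]]. destruct (hV p pV) as [m [hm1 hm2]].
  exists (l ++ m). split.
  - intros a ha. apply in_app_or in ha. destruct ha; auto.
  - intros q hq. split.
    + apply hl2. intros a ha. apply hq. apply in_or_app. auto.
    + apply hm2. intros a ha. apply hq. apply in_or_app. auto.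
Qed.

Lemma open_D (A : partial_ring) (s : A) : is_open (Dopen s).
Proof.
  intros p hp. exists (s :: nil). split.
  - intros a [<-|[]]. exact hp.
  - intros q hq. apply hq. left. reflexivity.
Qed.

Definition germ (A : partial_ring) (p : spec_pt A) : Type :=
  { V : spec_pt A -> Prop & { _ : is_open V /\ V p & Floc A V } }.
Definition gV {A p} (g : germ A p) : spec_pt A -> Prop := projT1 g.
Definition gH {A p} (g : germ A p) : is_open (gV g) /\ gV g p := projT1 (projT2 g).
Definition gx {A p} (g : germ A p) : Floc A (gV g) := projT2 (projT2 g).

Definition germ_eq (A : partial_ring) (p : spec_pt A) (g h : germ A p) : Prop :=
  exists W, is_open W /\ W p /\
    exists (h1 : subU W (gV g)) (h2 : subU W (gV h)), res h1 (gx g) = res h2 (gx h).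

Definition stalk (A : partial_ring) (p : spec_pt A) : Type := quot (germ A p) (germ_eq A p).

Definition mkgerm {A : partial_ring} (p : spec_pt A) (V : spec_pt A -> Prop)
    (hV : is_open V) (hp : V p) (x : Floc A V) : stalk A p :=
  qcls (existT (fun V => { _ : is_open V /\ V p & Floc A V }) V
          (existT (fun _ => Floc A V) (conj hV hp) x)).

Definition stalk_mul (A : partial_ring) (p : spec_pt A) (g h : stalk A p) : stalk A p :=
  let G := qrepr g in let H := qrepr h in
  mkgerm p (fun q => gV G q /\ gV H q)
    (open_inter A _ _ (proj1 (gH G)) (proj1 (gH H)))
    (conj (proj2 (gH G)) (proj2 (gH H)))
    (omul (Fops A _) (res (fun q (hq : gV G q /\ gV H q) => proj1 hq) (gx G))
                     (res (fun q (hq : gV G q /\ gV H q) => proj2 hq) (gx H))).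

Definition stalk_sum (A : partial_ring) (p : spec_pt A) (g h : stalk A p) : Prop :=
  let G := qrepr g in let H := qrepr h in
  exists W (hW : is_open W) (hWp : W p) (h1 : subU W (gV G)) (h2 : subU W (gV H)),
    osum (Fops A W) (res h1 (gx G)) (res h2 (gx H)).

Definition nbhd_in {A : partial_ring} (p : spec_pt A) (V V' : spec_pt A -> Prop) : Type :=
  { W : spec_pt A -> Prop | is_open W /\ W p /\ subU W V /\ subU W V' }.

Definition stalk_add (A : partial_ring) (p : spec_pt A) (g h : stalk A p) : stalk A p :=
  let G := qrepr g in let H := qrepr h in
  let w0 : nbhd_in p (gV G) (gV H) :=
    exist _ (fun q => gV G q /\ gV H q)
      (conj (open_inter A _ _ (proj1 (gH G)) (proj1 (gH H)))
      (conj (conj (proj2 (gH G)) (proj2 (gH H)))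
      (conj (fun q (hq : gV G q /\ gV H q) => proj1 hq)
            (fun q (hq : gV G q /\ gV H q) => proj2 hq)))) in
  let w := epsilon (inhabits w0)
     (fun w : nbhd_in p (gV G) (gV H) =>
        osum (Fops A (proj1_sig w))
          (res (proj1 (proj2 (proj2 (proj2_sig w)))) (gx G))
          (res (proj2 (proj2 (proj2 (proj2_sig w)))) (gx H))) in
  mkgerm p (proj1_sig w) (proj1 (proj2_sig w)) (proj1 (proj2 (proj2_sig w)))
    (oadd (Fops A (proj1_sig w))
          (res (proj1 (proj2 (proj2 (proj2_sig w)))) (gx G))
          (res (proj2 (proj2 (proj2 (proj2_sig w)))) (gx H))).

(* Sections of the sheafification O_X over U: families of germs that are
   locally induced by a section of the presheaf. *)
Definition locally_rep (A : partial_ring) (U : spec_pt A -> Prop)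
    (sg : forall p, U p -> stalk A p) : Prop :=
  forall p (hp : U p), exists V (hV : is_open V) (hVp : V p) (hVU : subU V U)
    (x : Floc A V), forall q (hq : V q), sg q (hVU q hq) = mkgerm q V hV hq x.

Definition OX (A : partial_ring) (U : spec_pt A -> Prop) : Type :=
  { sg : forall p, U p -> stalk A p | locally_rep A U sg }.

Definition OX_of (A : partial_ring) (U : spec_pt A -> Prop) (hU : is_open U)
    (x : Floc A U) : OX A U :=
  exist _ (fun p hp => mkgerm p U hU hp x)
    (fun p hp => ex_intro _ U (ex_intro _ hU (ex_intro _ hp
       (ex_intro _ (fun q (h : U q) => h) (ex_intro _ x (fun q hq => eq_refl)))))).

Definition OX_mul (A : partial_ring) (U : spec_pt A -> Prop) (a b : OX A U) : OX A U :=
  epsilon (inhabits a) (fun c => forall p (hp : U p),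
     proj1_sig c p hp = stalk_mul A p (proj1_sig a p hp) (proj1_sig b p hp)).

Definition OX_sum (A : partial_ring) (U : spec_pt A -> Prop) (a b : OX A U) : Prop :=
  forall p (hp : U p), stalk_sum A p (proj1_sig a p hp) (proj1_sig b p hp).

Definition OX_add (A : partial_ring) (U : spec_pt A -> Prop) (a b : OX A U) : OX A U :=
  epsilon (inhabits a) (fun c => forall p (hp : U p),
     proj1_sig c p hp = stalk_add A p (proj1_sig a p hp) (proj1_sig b p hp)).

Definition OX_ops (A : partial_ring) (U : spec_pt A -> Prop) (hU : is_open U) : pr_ops :=
  PROps (OX A U) (OX_of A U hU (ozero (Fops A U))) (OX_of A U hU (oone (Fops A U)))
        (OX_sum A U) (OX_add A U) (OX_mul A U).

(* Main.v *)
Require Import Defs.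
From Stdlib Require Import ClassicalEpsilon Classical FunctionalExtensionality PropExtensionality List Permutation.

Inductive mexp := MAtom (n : nat) | MOne | MMul (e1 e2 : mexp).

Fixpoint mflat (e : mexp) : list nat :=
  match e with MAtom n => n :: nil | MOne => nil | MMul e1 e2 => mflat e1 ++ mflat e2 end.

Fixpoint remove_one (n : nat) (l : list nat) : option (list nat) :=
  match l with
  | nil => None
  | x :: t => if Nat.eqb n x then Some t else
      match remove_one n t with Some t' => Some (x :: t') | None => None end
  end.

Fixpoint permb (l1 l2 : list nat) : bool :=
  match l1 with
  | nil => match l2 with nil => true | _ => false end
  | x :: t => match remove_one x l2 with Some l2' => permb t l2' | None => false end
  end.

Lemma remove_one_perm n l l' : remove_one n l = Some l' -> Permutation l (n :: l').
Proof.
  revert l'; induction l as [|x t IH]; simpl; intros l' H; [discriminate|].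
  destruct (Nat.eqb n x) eqn:E.
  - apply PeanoNat.Nat.eqb_eq in E; subst. inversion H; subst. reflexivity.
  - destruct (remove_one n t) as [t'|] eqn:E2; [|discriminate].
    inversion H; subst. specialize (IH t' eq_refl).
    etransitivity; [apply perm_skip; exact IH|]. apply perm_swap.
Qed.

Lemma permb_perm l1 l2 : permb l1 l2 = true -> Permutation l1 l2.
Proof.
  revert l2; induction l1 as [|x t IH]; simpl; intros l2 H.
  - destruct l2; [constructor|discriminate].
  - destruct (remove_one x l2) as [l2'|] eqn:E; [|discriminate].
    apply remove_one_perm in E. rewrite E. apply perm_skip, IH, H.
Qed.

Section CMon.
Variable A : partial_ring.

Fixpoint mden (env : list A) (e : mexp) : A :=
  match e with
  | MAtom n => nth n env pone
  | MOne => pone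
  | MMul e1 e2 => pmul (mden env e1) (mden env e2)
  end.

Definition lprod (env : list A) (l : list nat) : A :=
  fold_right (fun n acc => pmul (nth n env pone) acc) pone l.

Lemma lprod_app env l1 l2 : lprod env (l1 ++ l2) = pmul (lprod env l1) (lprod env l2).
Proof.
  induction l1 as [|x t IH]; simpl.
  - rewrite pmul1. reflexivity.
  - rewrite IH, pmulA. reflexivity.
Qed.

Lemma mden_flat env e : mden env e = lprod env (mflat e).
Proof.
  induction e; simpl.
  - rewrite pmulC, pmul1. reflexivity.
  - reflexivity.
  - rewrite lprod_app, IHe1, IHe2. reflexivity.
Qed.

Lemma lprod_perm env l1 l2 : Permutation l1 l2 -> lprod env l1 = lprod env l2.
Proof.
  induction 1; simpl; auto.
  - rewrite IHPermutation; auto.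
  - rewrite <- !pmulA, (pmulC _ (nth y env pone)). reflexivity.
  - congruence.
Qed.

Lemma mden_perm env e1 e2 : permb (mflat e1) (mflat e2) = true -> mden env e1 = mden env e2.
Proof.
  intro H. rewrite !mden_flat. apply lprod_perm, permb_perm, H.
Qed.
End CMon.

Ltac mem x env := lazymatch env with
 | nil => constr:(false)
 | cons x _ => constr:(true)
 | cons _ ?t => mem x t end.
Ltac atoms t env := lazymatch t with
 | pmul ?a ?b => let e1 := atoms a env in atoms b e1
 | pone => env
 | _ => let b := mem t env in lazymatch b with true => env | false => constr:(cons t env) end end.
Ltac idx x env := lazymatch env with
 | cons x _ => constr:(O)
 | cons _ ?t => let n := idx x t in constr:(S n) end.
Ltac quote t env := lazymatch t with
 | pmul ?a ?b => let e1 := quote a env in let e2 := quote b env in constr:(MMul e1 e2)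
 | pone => constr:(MOne)
 | _ => let n := idx t env in constr:(MAtom n) end.
Ltac cmon := lazymatch goal with |- @eq (pcar ?A) ?l ?r =>
  let env := atoms l (@nil (pcar A)) in let env := atoms r env in
  let el := quote l env in let er := quote r env in
  change (mden A env el = mden A env er); apply mden_perm; vm_compute; reflexivity end.


Lemma sig_eq {X : Type} (P : X -> Prop) (a b : sig P) : proj1_sig a = proj1_sig b -> a = b.
Proof. destruct a as [a ha], b as [b hb]; simpl; intros ->; f_equal; apply proof_irrelevance. Qed.

Section Quot.
Context {T : Type} (R : T -> T -> Prop) (Rrefl : forall x, R x x)
  (Rsym : forall x y, R x y -> R y x) (Rtrans : forall x y z, R x y -> R y z -> R x z).
Lemma quot_eq x y : @qcls T R x = qcls y <-> R x y.
Proof. split.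
 - intro H. apply (f_equal (@proj1_sig _ _)) in H. simpl in H. rewrite H. apply Rrefl.
 - intro H. apply sig_eq. simpl. apply functional_extensionality; intro z.
   apply propositional_extensionality. split; intro; eauto.
Qed.
End Quot.

Lemma qrepr_spec {T : Type} (R : T -> T -> Prop) (c : quot T R) : c = qcls (qrepr c).
Proof. apply sig_eq. unfold qrepr. destruct (constructive_indefinite_description _ _) as [x hx]. simpl. exact hx. Qed.

Lemma qrepr_qcls {T : Type} (R : T -> T -> Prop) (Rrefl : forall x, R x x)
  (Rsym : forall x y, R x y -> R y x) (Rtrans : forall x y z, R x y -> R y z -> R x z) x :
  R (qrepr (@qcls T R x)) x.
Proof. pose proof (qrepr_spec R (qcls x)) as H. apply (quot_eq R Rrefl Rsym Rtrans) in H. apply Rsym, H. Qed.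

Lemma lmk_surj (A : partial_ring) (S : A -> Prop) (x : loc A S) : exists a s h, x = lmk a s h.
Proof.
  pose proof (qrepr_spec _ x) as E. revert E. generalize (qrepr x). intros [[a s] h] E.
  exists a, s, h. exact E.
Qed.

Lemma lmk_pi (A : partial_ring) (S : A -> Prop) a s h h' : @lmk A S a s h = lmk a s h'.
Proof. rewrite (proof_irrelevance _ h h'). reflexivity. Qed.

Section Loc.
Variable A : partial_ring.
Variable S : A -> Prop.
Hypothesis S1 : S pone.
Hypothesis SM : forall x y, S x -> S y -> S (pmul x y).

Lemma leq_refl x : leq A S x x.
Proof. exists pone; split; auto. Qed.
Lemma leq_sym x y : leq A S x y -> leq A S y x.
Proof. intros [u [hu e]]; exists u; split; auto. Qed.
Lemma leq_trans x y z : leq A S x y -> leq A S y z -> leq A S x z.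
Proof.
  intros [u [hu e1]] [v [hv e2]]. exists (pmul (pmul u v) (lden y)). split.
  - apply SM; [apply SM; auto | exact (proj2_sig y)].
  - transitivity (pmul (pmul v (lden z)) (pmul (pmul u (lden y)) (lnum x))); [cmon|].
    rewrite e1.
    transitivity (pmul (pmul u (lden x)) (pmul (pmul v (lden z)) (lnum y))); [cmon|].
    rewrite e2. cmon.
Qed.

Lemma lmk_eq a s h b t h' : @lmk A S a s h = lmk b t h' <->
  exists u, S u /\ pmul (pmul u t) a = pmul (pmul u s) b.
Proof.
  unfold lmk. rewrite (quot_eq _ leq_refl leq_sym leq_trans). unfold leq. simpl. reflexivity.
Qed.

Lemma lmk_rep a s h : let r := qrepr (@lmk A S a s h) in
  exists u, S u /\ pmul (pmul u s) (lnum r) = pmul (pmul u (lden r)) a.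
Proof. exact (qrepr_qcls _ leq_refl leq_sym leq_trans (exist _ (a, s) h)). Qed.

Lemma loc_mul_lmk a s h b t h' :
  loc_mul A S SM (lmk a s h) (lmk b t h') = lmk (pmul a b) (pmul s t) (SM _ _ h h').
Proof.
  unfold loc_mul. pose proof (lmk_rep a s h) as H1. pose proof (lmk_rep b t h') as H2.
  revert H1 H2. generalize (qrepr (lmk a s h)) (qrepr (lmk b t h')).
  intros r r' [u [hu e1]] [v [hv e2]].
  apply lmk_eq. exists (pmul u v). split; [auto|].
  transitivity (pmul (pmul (pmul u s) (lnum r)) (pmul (pmul v t) (lnum r'))); [cmon|].
  rewrite e1, e2. cmon.
Qed.

Lemma sum_transfer a s b t a' s' b' t' u v1 v2 : S u -> S v1 -> S v2 -> S s -> S t ->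
  pmul (pmul v1 s') a = pmul (pmul v1 s) a' -> pmul (pmul v2 t') b = pmul (pmul v2 t) b' ->
  psum (pmul (pmul u t) a) (pmul (pmul u s) b) ->
  exists w, S w /\ psum (pmul (pmul w t') a') (pmul (pmul w s') b').
Proof.
  intros hu h1 h2 hs ht e1 e2 hp.
  exists (pmul (pmul (pmul (pmul u v1) v2) s) t). split; [repeat apply SM; auto|].
  set (m := pmul (pmul (pmul v1 v2) s') t').
  assert (E1 : pmul (pmul (pmul (pmul (pmul (pmul u v1) v2) s) t) t') a' = pmul (pmul (pmul u t) a) m).
  { transitivity (pmul (pmul (pmul (pmul u t) v2) t') (pmul (pmul v1 s) a')); [cmon|].
    rewrite <- e1. unfold m. cmon. }
  assert (E2 : pmul (pmul (pmul (pmul (pmul (pmul u v1) v2) s) t) s') b' = pmul (pmul (pmul u s) b) m).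
  { transitivity (pmul (pmul (pmul (pmul u s) v1) s') (pmul (pmul v2 t) b')); [cmon|].
    rewrite <- e2. unfold m. cmon. }
  rewrite E1, E2. apply psumM. exact hp.
Qed.

Lemma add_transfer a s b t a' s' b' t' u u' v1 v2 : S v1 -> S v2 ->
  pmul (pmul v1 s') a = pmul (pmul v1 s) a' -> pmul (pmul v2 t') b = pmul (pmul v2 t) b' ->
  psum (pmul (pmul u t) a) (pmul (pmul u s) b) ->
  psum (pmul (pmul u' t') a') (pmul (pmul u' s') b') ->
  exists w, S w /\
    pmul (pmul w (pmul (pmul u' s') t')) (padd (pmul (pmul u t) a) (pmul (pmul u s) b)) =
    pmul (pmul w (pmul (pmul u s) t)) (padd (pmul (pmul u' t') a') (pmul (pmul u' s') b')).
Proof.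
  intros h1 h2 e1 e2 p1 p2. exists (pmul v1 v2). split; [auto|].
  rewrite (pmulC A _ (padd _ _)). rewrite (pmulC A _ (padd _ _)).
  rewrite (pmulDl _ _ _ _ p1), (pmulDl _ _ _ _ p2). f_equal.
  - transitivity (pmul (pmul (pmul (pmul (pmul u t) u') t') v2) (pmul (pmul v1 s') a)); [cmon|].
    rewrite e1. cmon.
  - transitivity (pmul (pmul (pmul (pmul (pmul u s) u') s') v1) (pmul (pmul v2 t') b)); [cmon|].
    rewrite e2. cmon.
Qed.

Lemma loc_sum_lmk a s h b t h' : loc_sum A S (lmk a s h) (lmk b t h') <->
  exists u, S u /\ psum (pmul (pmul u t) a) (pmul (pmul u s) b).
Proof.
  unfold loc_sum. pose proof (lmk_rep a s h) as H1. pose proof (lmk_rep b t h') as H2.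
  revert H1 H2. generalize (qrepr (lmk a s h)) (qrepr (lmk b t h')).
  intros r r' [u1 [hu1 e1]] [u2 [hu2 e2]]. split.
  - intros [u [hu hp]]. exact (sum_transfer (lnum r) (lden r) (lnum r') (lden r') a s b t u u1 u2 hu hu1 hu2 (proj2_sig r) (proj2_sig r') e1 e2 hp).
  - intros [u [hu hp]]. exact (sum_transfer a s b t (lnum r) (lden r) (lnum r') (lden r') u u1 u2 hu hu1 hu2 h h' (eq_sym e1) (eq_sym e2) hp).
Qed.

Lemma loc_add_lmk a s h b t h' u (hu : S u) (hs : psum (pmul (pmul u t) a) (pmul (pmul u s) b)) :
  loc_add A S S1 SM (lmk a s h) (lmk b t h') =
  lmk (padd (pmul (pmul u t) a) (pmul (pmul u s) b)) (pmul (pmul u s) t) (SM _ _ (SM _ _ hu h) h').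
Proof.
  unfold loc_add. pose proof (lmk_rep a s h) as H1. pose proof (lmk_rep b t h') as H2.
  revert H1 H2. generalize (qrepr (lmk a s h)) (qrepr (lmk b t h')).
  intros r r' [u1 [hu1 e1]] [u2 [hu2 e2]].
  match goal with |- context [epsilon ?i ?P] =>
    pose proof (epsilon_spec i P) as Hw; set (w := epsilon i P) in * end.
  assert (Hex : exists w0, S w0 /\ psum (pmul (pmul w0 (lden r')) (lnum r)) (pmul (pmul w0 (lden r)) (lnum r'))).
  { exact (sum_transfer a s b t (lnum r) (lden r) (lnum r') (lden r') u u1 u2 hu hu1 hu2 h h' (eq_sym e1) (eq_sym e2) hs). }
  destruct Hex as [w0 [hw0 hp0]].
  specialize (Hw (ex_intro _ (exist S w0 hw0) hp0)).
  clearbody w. destruct w as [w hw]. simpl in Hw |- *.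
  apply lmk_eq.
  exact (add_transfer (lnum r) (lden r) (lnum r') (lden r') a s b t w u u1 u2 hu1 hu2 e1 e2 Hw hs).
Qed.
End Loc.

Definition lmap (A : partial_ring) (S S' : A -> Prop) (hSS : forall a, S a -> S' a) (x : loc A S) : loc A S' :=
  let r := qrepr x in lmk (lnum r) (lden r) (hSS _ (proj2_sig r)).

Lemma lmap_lmk (A : partial_ring) (S S' : A -> Prop) (S1 : S pone) (SM : forall x y, S x -> S y -> S (pmul x y))
  (S'1 : S' pone) (S'M : forall x y, S' x -> S' y -> S' (pmul x y)) (hSS : forall a, S a -> S' a) a s h :
  lmap A S S' hSS (lmk a s h) = lmk a s (hSS _ h).
Proof.
  unfold lmap. destruct (lmk_rep A S S1 SM a s h) as [u [hu e]].
  apply (lmk_eq A S' S'1 S'M). exists u. split; [apply hSS, hu | exact e].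
Qed.

Section Germs.
Variable A : partial_ring.

Lemma res_lmk (U V : spec_pt A -> Prop) (hVU : subU V U) a s hs :
  res hVU (lmk a s hs) = lmk a s (Sres hVU s hs).
Proof. exact (lmap_lmk A (S_U U) (S_U V) (S_U1 A U) (S_UM A U) (S_U1 A V) (S_UM A V) (Sres hVU) a s hs). Qed.

Lemma res_pi (U V : spec_pt A -> Prop) (h h' : subU V U) x : res h x = res h' x.
Proof. rewrite (proof_irrelevance _ h h'). reflexivity. Qed.

Lemma res_comp (U V W : spec_pt A -> Prop) (h1 : subU V U) (h2 : subU W V) x :
  res h2 (res h1 x) = res (fun q hq => h1 q (h2 q hq)) x.
Proof.
  destruct (lmk_surj _ _ x) as [a [s [hs ->]]]. rewrite !res_lmk. apply lmk_pi.
Qed.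

Lemma res_mul (U V : spec_pt A -> Prop) (h : subU V U) x y :
  res h (loc_mul A (S_U U) (S_UM A U) x y) = loc_mul A (S_U V) (S_UM A V) (res h x) (res h y).
Proof.
  destruct (lmk_surj _ _ x) as [a [s [hs ->]]]. destruct (lmk_surj _ _ y) as [b [t [ht ->]]].
  rewrite (loc_mul_lmk A _ (S_U1 A U)), !res_lmk, (loc_mul_lmk A _ (S_U1 A V)). apply lmk_pi.
Qed.

Lemma res_sum (U V : spec_pt A -> Prop) (h : subU V U) x y :
  loc_sum A (S_U U) x y -> loc_sum A (S_U V) (res h x) (res h y).
Proof.
  destruct (lmk_surj _ _ x) as [a [s [hs ->]]]. destruct (lmk_surj _ _ y) as [b [t [ht ->]]].
  rewrite !res_lmk, (loc_sum_lmk A _ (S_U1 A U) (S_UM A U)), (loc_sum_lmk A _ (S_U1 A V) (S_UM A V)).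
  intros [u [hu hp]]. exists u. split; [exact (Sres h u hu) | exact hp].
Qed.

Lemma res_add (U V : spec_pt A -> Prop) (h : subU V U) x y :
  loc_sum A (S_U U) x y ->
  res h (loc_add A (S_U U) (S_U1 A U) (S_UM A U) x y) =
  loc_add A (S_U V) (S_U1 A V) (S_UM A V) (res h x) (res h y).
Proof.
  destruct (lmk_surj _ _ x) as [a [s [hs ->]]]. destruct (lmk_surj _ _ y) as [b [t [ht ->]]].
  rewrite (loc_sum_lmk A _ (S_U1 A U) (S_UM A U)). intros [u [hu hp]].
  rewrite (loc_add_lmk A _ (S_U1 A U) (S_UM A U) _ _ _ _ _ _ u hu hp), !res_lmk.
  rewrite (loc_add_lmk A _ (S_U1 A V) (S_UM A V) _ _ _ _ _ _ u (Sres h u hu) hp).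
  apply lmk_pi.
Qed.

Lemma res_agree (U1 U2 W1 : spec_pt A -> Prop) (x1 : Floc A U1) (x2 : Floc A U2)
  (a1 : subU W1 U1) (b1 : subU W1 U2) : res a1 x1 = res b1 x2 ->
  forall W (c : subU W W1) (k1 : subU W U1) (k2 : subU W U2), res k1 x1 = res k2 x2.
Proof.
  intros e W c k1 k2.
  rewrite (res_pi _ _ k1 (fun q hq => a1 q (c q hq))), <- res_comp, e, res_comp. apply res_pi.
Qed.

Variable p : spec_pt A.

Lemma germ_eq_refl g : germ_eq A p g g.
Proof.
  exists (gV g). split; [exact (proj1 (gH g))|]. split; [exact (proj2 (gH g))|].
  exists (fun q h => h), (fun q h => h). reflexivity.
Qed.
Lemma germ_eq_sym g h : germ_eq A p g h -> germ_eq A p h g.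
Proof.
  intros [W [oW [pW [h1 [h2 e]]]]]. exists W; split; [auto|split; [auto|]].
  exists h2, h1. symmetry; exact e.
Qed.
Lemma germ_eq_trans g h k : germ_eq A p g h -> germ_eq A p h k -> germ_eq A p g k.
Proof.
  intros [W1 [oW1 [pW1 [h1 [h2 e1]]]]] [W2 [oW2 [pW2 [h3 [h4 e2]]]]].
  exists (fun q => W1 q /\ W2 q). split; [apply open_inter; auto|]. split; [split; auto|].
  exists (fun q hq => h1 q (proj1 hq)), (fun q hq => h4 q (proj2 hq)).
  transitivity (res (fun q (hq : W1 q /\ W2 q) => h2 q (proj1 hq)) (gx h)).
  - exact (res_agree _ _ _ _ _ h1 h2 e1 _ (fun q hq => proj1 hq) _ _).
  - exact (res_agree _ _ _ _ _ h3 h4 e2 _ (fun q hq => proj2 hq) _ _).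
Qed.

Definition mkg (V : spec_pt A -> Prop) (hV : is_open V) (hp : V p) (x : Floc A V) : germ A p :=
  existT (fun V => { _ : is_open V /\ V p & Floc A V }) V (existT (fun _ => Floc A V) (conj hV hp) x).

Lemma mkgerm_eq V hV hp x V' hV' hp' x' :
  mkgerm p V hV hp x = mkgerm p V' hV' hp' x' <->
  exists W, is_open W /\ W p /\ exists (h1 : subU W V) (h2 : subU W V'), res h1 x = res h2 x'.
Proof.
  unfold mkgerm. rewrite (quot_eq _ germ_eq_refl germ_eq_sym germ_eq_trans). unfold germ_eq. reflexivity.
Qed.

Lemma mkgerm_rep V hV hp x : germ_eq A p (qrepr (mkgerm p V hV hp x)) (mkg V hV hp x).
Proof. exact (qrepr_qcls _ germ_eq_refl germ_eq_sym germ_eq_trans (mkg V hV hp x)). Qed.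

End Germs.

Section Stalk.
Variable A : partial_ring.
Variable p : spec_pt A.

Lemma stalk_mul_mk V V' hV hV' hp hp' x y :
  stalk_mul A p (mkgerm p V hV hp x) (mkgerm p V' hV' hp' y) =
  mkgerm p (fun q => V q /\ V' q) (open_inter A _ _ hV hV') (conj hp hp')
    (loc_mul A _ (S_UM A _) (res (fun q (hq : V q /\ V' q) => proj1 hq) x)
                            (res (fun q (hq : V q /\ V' q) => proj2 hq) y)).
Proof.
  unfold stalk_mul.
  pose proof (mkgerm_rep A p V hV hp x) as HG. pose proof (mkgerm_rep A p V' hV' hp' y) as HH.
  revert HG HH. generalize (qrepr (mkgerm p V hV hp x)) (qrepr (mkgerm p V' hV' hp' y)).
  intros [V1 [[hV1 hp1] x1]] [V2 [[hV2 hp2] x2]]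
    [W1 [oW1 [pW1 [a1 [b1 e1]]]]] [W2 [oW2 [pW2 [a2 [b2 e2]]]]].
  cbn [gV gH gx projT1 projT2 mkg omul osum oadd Fops loc_ops] in *.
  apply mkgerm_eq. exists (fun q => W1 q /\ W2 q). split; [apply open_inter; auto|].
  split; [split; auto|].
  exists (fun q hq => conj (a1 q (proj1 hq)) (a2 q (proj2 hq))),
         (fun q hq => conj (b1 q (proj1 hq)) (b2 q (proj2 hq))).
  rewrite !res_mul, !res_comp. f_equal.
  - exact (res_agree A _ _ _ _ _ a1 b1 e1 _ (fun q hq => proj1 hq) _ _).
  - exact (res_agree A _ _ _ _ _ a2 b2 e2 _ (fun q hq => proj2 hq) _ _).
Qed.

Lemma stalk_add_mk V V' hV hV' hp hp' x y W0 (hW0 : is_open W0) (hW0p : W0 p)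
  (i1 : subU W0 V) (i2 : subU W0 V') :
  loc_sum A (S_U W0) (res i1 x) (res i2 y) ->
  stalk_sum A p (mkgerm p V hV hp x) (mkgerm p V' hV' hp' y) /\
  stalk_add A p (mkgerm p V hV hp x) (mkgerm p V' hV' hp' y) =
  mkgerm p W0 hW0 hW0p (loc_add A (S_U W0) (S_U1 A W0) (S_UM A W0) (res i1 x) (res i2 y)).
Proof.
  intro Hs. unfold stalk_sum, stalk_add.
  pose proof (mkgerm_rep A p V hV hp x) as HG. pose proof (mkgerm_rep A p V' hV' hp' y) as HH.
  revert HG HH. generalize (qrepr (mkgerm p V hV hp x)) (qrepr (mkgerm p V' hV' hp' y)).
  intros [V1 [[hV1 hp1] x1]] [V2 [[hV2 hp2] x2]]
    [W1 [oW1 [pW1 [a1 [b1 e1]]]]] [W2 [oW2 [pW2 [a2 [b2 e2]]]]].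
  cbn [gV gH gx projT1 projT2 mkg omul osum oadd Fops loc_ops] in *.
  set (W3 := fun q => W0 q /\ W1 q /\ W2 q).
  assert (oW3 : is_open W3) by (repeat apply open_inter; auto).
  assert (pW3 : W3 p) by (repeat split; auto).
  set (k1 := (fun q (hq : W3 q) => a1 q (proj1 (proj2 hq))) : subU W3 V1).
  set (k2 := (fun q (hq : W3 q) => a2 q (proj2 (proj2 hq))) : subU W3 V2).
  assert (Hs3 : loc_sum A (S_U W3) (res k1 x1) (res k2 x2)).
  { rewrite (res_agree A _ _ _ _ _ a1 b1 e1 W3 (fun q hq => proj1 (proj2 hq)) k1 (fun q hq => i1 q (proj1 hq))).
    rewrite (res_agree A _ _ _ _ _ a2 b2 e2 W3 (fun q hq => proj2 (proj2 hq)) k2 (fun q hq => i2 q (proj1 hq))).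
    rewrite <- (res_comp A _ _ _ i1 (fun q (hq : W3 q) => proj1 hq)).
    rewrite <- (res_comp A _ _ _ i2 (fun q (hq : W3 q) => proj1 hq)).
    apply res_sum, Hs. }
  split.
  - exists W3, oW3, pW3, k1, k2. exact Hs3.
  - match goal with |- context [epsilon ?i ?P] =>
      pose proof (epsilon_spec i P) as Hw; set (w := epsilon i P) in * end.
    match type of Hw with (exists x, ?P x) -> _ =>
      assert (Hq : P (exist _ W3 (conj oW3 (conj pW3 (conj k1 k2))))) by (cbv beta; cbn [proj1_sig proj2_sig]; rewrite (res_pi A V1 W3 _ k1), (res_pi A V2 W3 _ k2); exact Hs3) end.
    specialize (Hw (ex_intro _ _ Hq)).
    clearbody w. destruct w as [w [ow [pw [c1 c2]]]]. cbn [proj1_sig proj2_sig proj1 proj2] in *.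
    apply mkgerm_eq. exists (fun q => w q /\ W3 q). split; [apply open_inter; auto|].
    split; [split; auto|].
    exists (fun q hq => proj1 hq), (fun q hq => proj1 (proj2 hq)).
    rewrite (res_add A _ _ _ _ _ Hw), (res_add A _ _ _ _ _ Hs), !res_comp. f_equal.
    + exact (res_agree A _ _ _ _ _ a1 b1 e1 _ (fun q hq => proj1 (proj2 (proj2 hq))) _ _).
    + exact (res_agree A _ _ _ _ _ a2 b2 e2 _ (fun q hq => proj2 (proj2 (proj2 hq))) _ _).
Qed.

End Stalk.

Lemma OX_ext (A : partial_ring) U (c1 c2 : OX A U) :
  (forall p hp, proj1_sig c1 p hp = proj1_sig c2 p hp) -> c1 = c2.
Proof.
  intro H. apply sig_eq. apply functional_extensionality_dep; intro p.
  apply functional_extensionality_dep; intro hp. apply H.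
Qed.

Section Zorn.
Variable T : Type.
Variable F : (T -> Prop) -> Prop.
Variable I0 : T -> Prop.
Hypothesis FI0 : F I0.
Definition incl (X Y : T -> Prop) := forall t, X t -> Y t.
Definition bigU (K : (T -> Prop) -> Prop) : T -> Prop := fun t => exists X, K X /\ X t.
Definition chain (K : (T -> Prop) -> Prop) := forall X Y, K X -> K Y -> incl X Y \/ incl Y X.
Hypothesis Fchain : forall K, (forall X, K X -> F X) -> chain K -> (exists X, K X) -> F (bigU K).

Lemma set_ext X Y : incl X Y -> incl Y X -> X = Y.
Proof.
  intros h1 h2. apply functional_extensionality; intro t. apply propositional_extensionality; split; auto.
Qed.

Definition next (X : T -> Prop) : T -> Prop :=
  match excluded_middle_informative (exists Y, F Y /\ incl X Y /\ ~ incl Y X) with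
  | left h => proj1_sig (constructive_indefinite_description _ h)
  | right _ => X
  end.

Lemma next_spec X : incl X (next X) /\ (F X -> F (next X)) /\
  ((exists Y, F Y /\ incl X Y /\ ~ incl Y X) -> ~ incl (next X) X).
Proof.
  unfold next. destruct (excluded_middle_informative _) as [h|h].
  - destruct (constructive_indefinite_description _ h) as [Y [h1 [h2 h3]]]. simpl. auto.
  - split; [intros t; auto|]. split; [auto|]. intro hh; contradiction.
Qed.
Lemma next_incl X : incl X (next X). Proof. apply next_spec. Qed.

Definition closed (C : (T -> Prop) -> Prop) :=
  C I0 /\ (forall X, C X -> C (next X)) /\
  (forall K, (forall X, K X -> C X) -> chain K -> (exists X, K X) -> C (bigU K)).

Definition Tw X := forall C, closed C -> C X.

Lemma Tw_closed : closed Tw.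
Proof.
  split; [|split].
  - intros C hC. apply hC.
  - intros X hX C hC. apply hC, hX, hC.
  - intros K hK hc hne C hC. apply hC; auto. intros X hX. apply hK; auto.
Qed.

Lemma Tw_union K : (forall X, K X -> Tw X) -> chain K -> (exists X, K X) -> Tw (bigU K).
Proof. apply Tw_closed. Qed.

Lemma Tw_ind (P : (T -> Prop) -> Prop) : closed (fun X => Tw X /\ P X) -> forall X, Tw X -> P X.
Proof. intros hc X hX. apply (hX _ hc). Qed.

Lemma Tw_I0 X : Tw X -> incl I0 X.
Proof.
  apply Tw_ind. split; [|split].
  - split; [apply Tw_closed | intros t; auto].
  - intros Y [hY hi]. split; [apply Tw_closed, hY|]. intros t ht. apply next_incl, hi, ht.
  - intros K hK hc [Y hY]. split; [apply Tw_union; [intros Z hZ; apply hK, hZ | exact hc | exists Y; exact hY]|].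
    intros t ht. exists Y. split; auto. apply (proj2 (hK Y hY)), ht.
Qed.

Definition extreme c := forall t, Tw t -> incl t c -> ~ incl c t -> incl (next t) c.

Lemma lemA c : Tw c -> extreme c -> forall t, Tw t -> incl t c \/ incl (next c) t.
Proof.
  intros hc he. apply Tw_ind. split; [|split].
  - split; [apply Tw_closed|]. left. apply Tw_I0, hc.
  - intros t [ht [h|h]]; (split; [apply Tw_closed, ht|]).
    + destruct (classic (incl c t)) as [h2|h2].
      * right. rewrite (set_ext t c h h2). intros z; auto.
      * left. apply he; auto.
    + right. intros z hz. apply next_incl, h, hz.
  - intros K hK hch hne. split; [apply Tw_union; auto; intros Z hZ; apply hK, hZ|].
    destruct (classic (forall X, K X -> incl X c)) as [h|h].
    + left. intros z [X [hX hz]]. apply (h X hX), hz.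
    + right. apply not_all_ex_not in h. destruct h as [X hX].
      apply imply_to_and in hX. destruct hX as [hKX hX].
      destruct (proj2 (hK X hKX)) as [h'|h']; [contradiction|].
      intros z hz. exists X. split; auto.
Qed.

Lemma lemB c : Tw c -> extreme c.
Proof.
  apply Tw_ind. split; [|split].
  - split; [apply Tw_closed|]. intros t ht h1 h2. exfalso. apply h2, Tw_I0, ht.
  - intros c0 [hc he]. split; [apply Tw_closed, hc|]. intros t ht h1 h2.
    destruct (lemA c0 hc he t ht) as [h|h]; [|contradiction].
    destruct (classic (incl c0 t)) as [h3|h3].
    + rewrite (set_ext t c0 h h3). intros z; auto.
    + intros z hz. apply next_incl. apply (he t ht h h3), hz.
  - intros K hK hch hne. split; [apply Tw_union; auto; intros Z hZ; apply hK, hZ|].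
    intros t ht h1 h2.
    destruct (classic (exists c1, K c1 /\ ~ incl c1 t)) as [[c1 [hKc1 hc]]|hn].
    + destruct (hK c1 hKc1) as [hTc hec].
      destruct (lemA c1 hTc hec t ht) as [h|h].
      * intros z hz. exists c1. split; auto. apply (hec t ht h hc), hz.
      * exfalso. apply hc. intros z hz. apply h, next_incl, hz.
    + exfalso. apply h2. intros z [X [hX hz]].
      destruct (classic (incl X t)) as [hi|hi]; [apply hi, hz|].
      exfalso. apply hn. exists X. auto.
Qed.

Lemma Tw_chain : chain Tw.
Proof.
  intros t c ht hc. destruct (lemA c hc (lemB c hc) t ht) as [h|h]; [left; auto|].
  right. intros z hz. apply h, next_incl, hz.
Qed.

Lemma Tw_F X : Tw X -> F X.
Proof.
  intro hX. apply hX. split; [auto|split].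
  - intros Y hY. apply next_spec, hY.
  - intros K hK hc hne. apply Fchain; auto.
Qed.

Theorem zorn : exists M, F M /\ forall Y, F Y -> incl M Y -> incl Y M.
Proof.
  set (M := bigU Tw).
  assert (hM : Tw M) by (apply Tw_closed; [intros; auto | apply Tw_chain | exists I0; apply Tw_closed]).
  exists M. split; [apply Tw_F, hM|].
  intros Y hY hMY. apply NNPP. intro hn.
  assert (hN : Tw (next M)) by exact (proj1 (proj2 Tw_closed) M hM).
  apply (proj2 (proj2 (next_spec M))).
  - exists Y. auto.
  - intros z hz. exists (next M). auto.
Qed.
End Zorn.

Section Krull.
Variable A : partial_ring.
Variable s : A.

Definition gen (P : A -> Prop) (a : A) : A -> Prop :=
  fun x => forall J, is_ideal A J -> (forall y, P y -> J y) -> J a -> J x.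

Lemma gen_ideal P a : is_ideal A (gen P a).
Proof.
  split; [|split].
  - intros J [J0 [JD JM]] _ _. exact J0.
  - intros x y hx hy hs J hJ h1 h2. pose proof hJ as [J0 [JD JM]]. apply JD; [apply hx|apply hy|]; auto.
  - intros x z hx J hJ h1 h2. pose proof hJ as [J0 [JD JM]]. apply JM; apply hx; auto.
Qed.

Lemma prod_gen P a b : is_ideal A P -> P (pmul a b) ->
  forall u, gen P a u -> forall v, gen P b v -> P (pmul u v).
Proof.
  intros [P0 [PD PM]] hab u hu.
  apply hu.
  - split; [|split].
    + intros v _. rewrite pmul0. exact P0.
    + intros u1 u2 h1 h2 hs v hv. rewrite (pmulDl _ _ _ _ hs). apply PD; auto. apply psumM, hs.
    + intros u1 x h1 v hv. replace (pmul (pmul u1 x) v) with (pmul (pmul u1 v) x) by cmon. apply PM; auto.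
  - intros y hy v _. apply PM, hy.
  - intros v hv. apply hv.
    + split; [|split].
      * rewrite pmulC, pmul0. exact P0.
      * intros v1 v2 h1 h2 hs. rewrite pmulC, (pmulDl _ _ _ _ hs), (pmulC _ v1), (pmulC _ v2).
        apply PD; auto. rewrite (pmulC _ a), (pmulC _ a) in *. apply psumM, hs.
      * intros v1 x h1. replace (pmul a (pmul v1 x)) with (pmul (pmul a v1) x) by cmon. apply PM, h1.
    + intros y hy. rewrite pmulC. apply PM, hy.
    + exact hab.
Qed.

Lemma krull (I : A -> Prop) : is_ideal A I -> (forall n, ~ I (ppow s n)) ->
  exists P, is_prime A P /\ (forall a, I a -> P a) /\ forall n, ~ P (ppow s n).
Proof.
  intros hI hn.
  set (F := fun J => is_ideal A J /\ (forall a, I a -> J a) /\ forall n, ~ J (ppow s n)).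
  destruct (zorn A F I) as [P [[hP [hIP hPn]] hmax]].
  - split; [auto|split; auto].
  - intros K hK hc [X0 hX0]. split; [split; [|split]|split].
    + exists X0. split; auto. exact (proj1 (proj1 (hK X0 hX0))).
    + intros a b [X [hX ha]] [Y [hY hb]] hs.
      destruct (hc X Y hX hY) as [h|h].
      * exists Y. split; auto. exact (proj1 (proj2 (proj1 (hK Y hY))) a b (h a ha) hb hs).
      * exists X. split; auto. exact (proj1 (proj2 (proj1 (hK X hX))) a b ha (h b hb) hs).
    + intros a x [X [hX ha]]. exists X. split; auto. exact (proj2 (proj2 (proj1 (hK X hX))) a x ha).
    + intros a ha. exists X0. split; auto. exact (proj1 (proj2 (hK X0 hX0)) a ha).
    + intros n [X [hX h]]. apply (proj2 (proj2 (hK X hX)) n h).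
  - exists P. split; [|split; auto].
    split; [exact hP|split].
    + intro h. apply (hPn 0). exact h.
    + intros a b hab. apply NNPP. intro hn2. apply not_or_and in hn2. destruct hn2 as [ha hb].
      assert (Ha : exists m, gen P a (ppow s m)).
      { apply NNPP. intro h. apply ha.
        assert (hsub : incl A (gen P a) P).
        { apply hmax.
          - split; [apply gen_ideal|split].
            + intros y hy J hJ h1 h2. apply h1, hIP, hy.
            + intros m hm. apply h. exists m. exact hm.
          - intros y hy J hJ h1 h2. apply h1, hy. }
        apply hsub. intros J hJ h1 h2. exact h2. }
      assert (Hb : exists m, gen P b (ppow s m)).
      { apply NNPP. intro h. apply hb.
        assert (hsub : incl A (gen P b) P).
        { apply hmax.
          - split; [apply gen_ideal|split].
            + intros y hy J hJ h1 h2. apply h1, hIP, hy.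
            + intros m hm. apply h. exists m. exact hm.
          - intros y hy J hJ h1 h2. apply h1, hy. }
        apply hsub. intros J hJ h1 h2. exact h2. }
      destruct Ha as [m hm]. destruct Hb as [k hk].
      apply (hPn (m + k)). rewrite ppow_add. apply (prod_gen P a b hP hab); auto.
Qed.
End Krull.

Section Main.
Variable A : partial_ring.
Variable s : A.

Lemma pow_SU : forall t, powS s t -> S_U (Dopen s) t.
Proof.
  intros t [k ->] p hp. unfold Dopen in *. induction k as [|k IH].
  - exact (proj1 (proj2 (proj2_sig p))).
  - intro H. change (proj1_sig p (pmul s (ppow s k))) in H.
    destruct (proj2 (proj2 (proj2_sig p)) _ _ H); auto.
Qed.

Definition phi (x : loc A (powS s)) : Floc A (Dopen s) := lmap A _ _ pow_SU x.

Definition fmap (x : loc A (powS s)) : OX A (Dopen s) := OX_of A (Dopen s) (open_D A s) (phi x).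

Lemma phi_lmk a t h : phi (lmk a t h) = lmk a t (pow_SU t h).
Proof. exact (lmap_lmk A _ _ (powS1 A s) (powSM A s) (S_U1 A _) (S_UM A _) pow_SU a t h). Qed.

Lemma idU : subU (Dopen s) (Dopen s). Proof. intros q h; exact h. Qed.


Lemma fmap_mul_pt x y p hp :
  proj1_sig (fmap (loc_mul A _ (powSM A s) x y)) p hp =
  stalk_mul A p (proj1_sig (fmap x) p hp) (proj1_sig (fmap y) p hp).
Proof.
  unfold fmap, OX_of; cbn [proj1_sig]. rewrite stalk_mul_mk.
  destruct (lmk_surj _ _ x) as [a [t [ht ->]]]. destruct (lmk_surj _ _ y) as [b [r [hr ->]]].
  rewrite (loc_mul_lmk A _ (powS1 A s)), !phi_lmk, !res_lmk, (loc_mul_lmk A _ (S_U1 A _)).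
  apply mkgerm_eq. exists (fun q => Dopen s q /\ Dopen s q).
  split; [apply open_inter; apply open_D|]. split; [split; auto|].
  exists (fun q hq => proj1 hq), (fun q hq => hq). rewrite !res_lmk. apply lmk_pi.
Qed.

Lemma fmap_add_pt x y (H : loc_sum A (powS s) x y) p hp :
  stalk_sum A p (proj1_sig (fmap x) p hp) (proj1_sig (fmap y) p hp) /\
  proj1_sig (fmap (loc_add A _ (powS1 A s) (powSM A s) x y)) p hp =
  stalk_add A p (proj1_sig (fmap x) p hp) (proj1_sig (fmap y) p hp).
Proof.
  unfold fmap, OX_of; cbn [proj1_sig].
  destruct (lmk_surj _ _ x) as [a [t [ht ->]]]. destruct (lmk_surj _ _ y) as [b [r [hr ->]]].
  apply (loc_sum_lmk A _ (powS1 A s) (powSM A s)) in H. destruct H as [u [hu hps]].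
  assert (Hs : loc_sum A (S_U (Dopen s)) (res idU (phi (lmk a t ht))) (res idU (phi (lmk b r hr)))).
  { rewrite !phi_lmk, !res_lmk. apply (loc_sum_lmk A _ (S_U1 A _) (S_UM A _)).
    exists u. split; [apply pow_SU, hu | exact hps]. }
  destruct (stalk_add_mk A p _ _ (open_D A s) (open_D A s) hp hp _ _ _ (open_D A s) hp idU idU Hs) as [H1 H2].
  split; [exact H1|]. rewrite H2. f_equal.
  rewrite (loc_add_lmk A _ (powS1 A s) (powSM A s) _ _ _ _ _ _ u hu hps), !phi_lmk, !res_lmk.
  rewrite (loc_add_lmk A _ (S_U1 A _) (S_UM A _) _ _ _ _ _ _ u (pow_SU u hu) hps).
  apply lmk_pi.
Qed.

Lemma fmap_inj x y : fmap x = fmap y -> x = y.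
Proof.
  intro E.
  destruct (lmk_surj _ _ x) as [a [t [ht ->]]]. destruct (lmk_surj _ _ y) as [b [r [hr ->]]].
  apply (lmk_eq A _ (powS1 A s) (powSM A s)).
  set (I := fun u => pmul (pmul u r) a = pmul (pmul u t) b).
  assert (Hloc : forall P : spec_pt A, Dopen s P -> exists u, I u /\ ~ proj1_sig P u).
  { intros P hP. pose proof (f_equal (fun c => proj1_sig c P hP) E) as E2.
    unfold fmap, OX_of in E2; cbv beta in E2; cbn [proj1_sig] in E2.
    rewrite !phi_lmk in E2. apply mkgerm_eq in E2.
    destruct E2 as [W [oW [pW [h1 [h2 e]]]]]. rewrite !res_lmk in e.
    apply (lmk_eq A _ (S_U1 A _) (S_UM A _)) in e. destruct e as [u [hu eu]].
    exists u. split; [exact eu | exact (hu P pW)]. }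
  destruct (classic (exists n, I (ppow s n))) as [[n hn]|Hn].
  - exists (ppow s n). split; [exists n; reflexivity | exact hn].
  - exfalso.
    assert (hI : is_ideal A I).
    { split; [|split].
      - unfold I. rewrite !pmul0. reflexivity.
      - intros u1 u2 e1 e2 hs. unfold I in *.
        rewrite (pmulDl _ _ _ r hs), (pmulDl _ _ _ a (psumM _ _ _ r hs)),
                (pmulDl _ _ _ t hs), (pmulDl _ _ _ b (psumM _ _ _ t hs)), e1, e2. reflexivity.
      - intros u x e. unfold I in *.
        transitivity (pmul x (pmul (pmul u r) a)); [cmon|]. rewrite e. cmon. }
    destruct (krull A s I hI (fun n h => Hn (ex_intro _ n h))) as [P [hP [hIP hPn]]].
    assert (hs : Dopen s (exist _ P hP)).
    { intro h. apply (hPn 1). exact (proj2 (proj2 (proj1 hP)) s pone h). }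
    destruct (Hloc _ hs) as [u [hu hnu]]. apply hnu. exact (hIP u hu).
Qed.

End Main.

Theorem mainTheorem12 (A : partial_ring) (s : A) :
  exists f : loc_pow A s -> OX_ops A (Dopen s) (open_D A s),
    is_pr_mono (loc_pow A s) (OX_ops A (Dopen s) (open_D A s)) f.
Proof.
  exists (fmap A s). split; [split; [|split; [|split]]|].
  - cbn [ozero loc_pow loc_ops OX_ops Fops]. unfold fmap. f_equal. rewrite phi_lmk. apply lmk_pi.
  - cbn [oone loc_pow loc_ops OX_ops Fops]. unfold fmap. f_equal. rewrite phi_lmk. apply lmk_pi.
  - intros x y. cbn [omul loc_pow loc_ops OX_ops Fops]. unfold OX_mul.
    match goal with |- _ = epsilon ?i ?P =>
      pose proof (epsilon_spec i P) as He; set (e := epsilon i P) in * end.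
    match type of He with (exists c, ?P c) -> _ =>
      assert (Hq : P (fmap A s (loc_mul A _ (powSM A s) x y))) by (cbv beta; intros p hp; apply fmap_mul_pt) end.
    specialize (He (ex_intro _ _ Hq)). clearbody e.
    apply OX_ext. intros p hp. rewrite (He p hp). apply fmap_mul_pt.
  - intros x y H. cbn [osum oadd loc_pow loc_ops OX_ops Fops] in *. split.
    + intros p hp. apply (fmap_add_pt A s x y H p hp).
    + unfold OX_add.
      match goal with |- _ = epsilon ?i ?P =>
        pose proof (epsilon_spec i P) as He; set (e := epsilon i P) in * end.
      match type of He with (exists c, ?P c) -> _ =>
        assert (Hq : P (fmap A s (loc_add A _ (powS1 A s) (powSM A s) x y)))
          by (cbv beta; intros p hp; apply (fmap_add_pt A s x y H p hp)) end.
      specialize (He (ex_intro _ _ Hq)). clearbody e.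
      apply OX_ext. intros p hp. rewrite (He p hp). apply (fmap_add_pt A s x y H p hp).
  - apply fmap_inj.
Qed.
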